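(* For every field $F$, $P(F)\leq m_F$.
   Context: $P(F)\in\mathbb Z_{\geq1}\cup\{\infty\}$ is the smallest $p$ such that every sum of squares in $F$ is a sum of $p$ squares ($\infty$ if no such $p$ exists). $m_F\in\mathbb Z_{\geq1}\cup\{\infty\}$ is the smallest $m$ such that for every $n$, every subspace $V\subseteq F^n$ of dimension $\geq m$ on which the restriction of the quadratic form $q(x)=x_1^2+\dots+x_n^2$ is non-singular (i.e. $x\mapsto B_q(x,-)|_V$ is an isomorphism $V\to V^*$, where $B_q(x,y)=q(x+y)-q(x)-q(y)$) contains a vector $v$ with $q(v)=1$. *)

(* Defs.v *)
From HB Require Import structures.
From mathcomp Require Import all_boot all_order all_algebra.
Set Implicit Arguments. Unset Strict Implicit. Unset Printing Implicit Defensive.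
Import GRing.Theory.
Local Open Scope ring_scope.

Definition sum_of_squares (F : fieldType) (a : F) : Prop :=
  exists (k : nat) (x : 'I_k -> F), a = \sum_(i < k) x i ^+ 2.

Definition sum_of_p_squares (F : fieldType) (p : nat) (a : F) : Prop :=
  exists x : 'I_p -> F, a = \sum_(i < p) x i ^+ 2.

Definition pyth_bound (F : fieldType) (p : nat) : Prop :=
  forall a : F, sum_of_squares a -> sum_of_p_squares p a.

(* P(F) = p  (p finite); P(F) = oo iff no p satisfies is_pythagoras_number *)
Definition is_pythagoras_number (F : fieldType) (p : nat) : Prop :=
  (1 <= p)%N /\ pyth_bound F p /\
  forall p' : nat, (1 <= p')%N -> pyth_bound F p' -> (p <= p')%N.

Definition qsq (F : fieldType) (n : nat) (x : 'rV[F]_n) : F :=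
  \sum_(i < n) x 0 i ^+ 2.

Definition Bq (F : fieldType) (n : nat) (x y : 'rV[F]_n) : F :=
  qsq (x + y) - qsq x - qsq y.

(* q restricted to V is non-singular: x |-> B_q(x,-)|_V is an isomorphism
   V -> V^*; as V is finite dimensional this means it is injective. *)
Definition q_nonsingular_on (F : fieldType) (n : nat) (V : {vspace 'rV[F]_n}) : Prop :=
  forall x, x \in V -> (forall y, y \in V -> Bq x y = 0) -> x = 0.

Definition m_bound (F : fieldType) (m : nat) : Prop :=
  forall (n : nat) (V : {vspace 'rV[F]_n}),
    (m <= \dim V)%N -> q_nonsingular_on V ->
    exists2 v, v \in V & qsq v = 1.

(* m_F = m (m finite); m_F = oo iff no m satisfies is_m_F *)
Definition is_m_F (F : fieldType) (m : nat) : Prop :=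
  (1 <= m)%N /\ m_bound F m /\
  forall m' : nat, (1 <= m')%N -> m_bound F m' -> (m <= m')%N.

(* Main.v *)
Require Import Defs.
Set Warnings "-notation-overridden,-ambiguous-paths,-redundant-canonical-projection".
From mathcomp Require Import all_boot all_order all_algebra.
From HB Require Import structures.
From Stdlib Require Import Classical.
From mathcomp Require Import ring.
Set Implicit Arguments. Unset Strict Implicit. Unset Printing Implicit Defensive.
Import GRing.Theory.
Local Open Scope ring_scope.

Section Construction.
Variables (F : fieldType) (m k : nat) (c : 'rV[F]_k).

Definition fm (u : 'rV[F]_m) : 'rV[F]_(m * k) := mxvec (u^T *m c).

Lemma fm_is_linear : linear fm.
Proof.
move=> a u w; rewrite /fm linearD linearZ /= mulmxDl -scalemxAl.
by rewrite linearD linearZ.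
Qed.

HB.instance Definition _ := GRing.isLinear.Build F 'rV[F]_m 'rV[F]_(m * k) _ fm fm_is_linear.

Lemma fmE u i j : fm u 0 (mxvec_index i j) = u 0 i * c 0 j.
Proof. by rewrite /fm mxvecE mxE big_ord1 !mxE. Qed.

Lemma qsq_fm u : qsq (fm u) = qsq c * qsq u.
Proof.
rewrite /qsq (reindex _ (curry_mxvec_bij _ _)) /=. transitivity (\sum_i \sum_j fm u 0 (mxvec_index i j) ^+ 2).
  by rewrite pair_bigA; apply: eq_bigr => -[i j].
rewrite mulrC mulr_suml; apply: eq_bigr => i _; rewrite mulr_sumr; apply: eq_bigr => j _.
by rewrite fmE exprMn.
Qed.

Lemma Bq_fm u w : Bq (fm u) (fm w) = qsq c * Bq u w.
Proof. by rewrite /Bq -linearD /= !qsq_fm !mulrBr. Qed.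

End Construction.

Lemma Bq_delta (F : fieldType) n (u : 'rV[F]_n) i : Bq u (delta_mx 0 i) = u 0 i *+ 2.
Proof.
rewrite /Bq /qsq -!sumrB (bigD1 i) //= big1 ?addr0.
  by rewrite !mxE !eqxx /= sqrrD mulr1; ring.
move=> j /negbTE ji; rewrite !mxE ji /= addr0 expr0n /=; ring.
Qed.

Lemma char2_case (F : fieldType) (m : nat) : (1 <= m)%N -> (2%:R : F) = 0 -> pyth_bound F m.
Proof.
move=> m1 two0 a [k [x ->]].
have -> : \sum_(i < k) x i ^+ 2 = (\sum_(i < k) x i) ^+ 2.
  apply: (big_ind2 (fun a b => a = b ^+ 2)); first by rewrite expr0n.
  move=> a1 b1 a2 b2 -> ->; rewrite sqrrD -mulr_natr two0 mulr0 addr0 //.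
  by [].
case: m m1 => // m' _.
exists (fun i : 'I_m'.+1 => if val i == 0%N then \sum_(i < k) x i else 0).
rewrite big_ord_recl /= [X in _ + X]big1 ?addr0 // => i _; by rewrite expr0n.
Qed.

Lemma main_case (F : fieldType) (m : nat) : (2%:R : F) != 0 -> m_bound F m -> pyth_bound F m.
Proof.
move=> two0 mb a [k [x ->]].
set a' := \sum_(i < k) x i ^+ 2.
have [a0|a0] := eqVneq a' 0.
  by rewrite a0; exists (fun _ => 0); rewrite big1 // => i _; rewrite expr0n.
pose c : 'rV[F]_k := \row_j (x j / a').
have qc : qsq c = a'^-1.
  rewrite /qsq; under eq_bigr => j _ do rewrite mxE expr_div_n.
  rewrite -mulr_suml -/a'; field; exact: a0.
have qc0 : qsq c != 0 by rewrite qc invr_eq0.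
have [j cj] : exists j, c 0 j != 0.
  apply/existsP; apply: contraR qc0; rewrite negb_exists => /forallP H.
  rewrite /qsq big1 // => j _; move: (H j); rewrite negbK => /eqP ->; exact: expr0n.
have inj : injective (@fm _ m _ c).
  move=> u w /eqP; rewrite -subr_eq0 -linearB /= => /eqP H.
  apply/rowP => i; apply/eqP; rewrite -subr_eq0; apply/eqP.
  have := fmE c (u - w) i j; rewrite H mxE => /esym/eqP.
  by rewrite mulf_eq0 (negbTE cj) orbF => /eqP; rewrite !mxE.
pose f := linfun (@fm _ m _ c).
pose V := (f @: fullv)%VS.
have dimV : \dim V = m.
  rewrite limg_dim_eq; first by rewrite dimvf; apply: mul1n.
  have /lker0P/eqP -> : injective f by move=> u w; rewrite !lfunE; exact: inj.
  exact: capv0.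
have ns : q_nonsingular_on V.
  move=> v /memv_imgP [u _ ->] H; rewrite lfunE /= in H *.
  suff -> : u = 0 by rewrite linear0.
  apply/rowP => i; rewrite mxE.
  have Hi : f (delta_mx 0 i) \in V by exact: memv_img (memvf _).
  rewrite lfunE in Hi.
  have := H _ Hi; rewrite Bq_fm Bq_delta => /eqP.
  rewrite mulf_eq0 (negbTE qc0) /= -mulr_natr mulf_eq0 (negbTE two0) orbF.
  by move/eqP.
have [v /memv_imgP [u _ ->]] := mb _ V (eq_leq (esym dimV)) ns.
rewrite lfunE /= qsq_fm qc => H.
exists (fun i => u 0 i); change (a' = qsq u).
by rewrite -[LHS]mulr1 -H mulrA mulfV // mul1r.
Qed.

Lemma exists_min (P : nat -> Prop) n : P n ->
  exists p, [/\ P p, (forall p', P p' -> (p <= p')%N) & (p <= n)%N].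
Proof.
elim: n {-2}n (leqnn n) => [|N IH] n hn Pn.
  exists n; split=> // p' _; move: hn; rewrite leqn0 => /eqP ->; exact: leq0n.
case: (classic (exists p', P p' /\ (p' < n)%N)) => [[p' [Pp' lt]]|nex].
  have hp : (p' <= N)%N by rewrite -ltnS (leq_trans lt hn).
  have [p [Pp mn le]] := IH p' hp Pp'.
  exists p; split=> //; apply: (leq_trans le); exact: ltnW.
exists n; split=> // p' Pp'; rewrite leqNgt; apply/negP => lt; apply: nex; by exists p'.
Qed.

Theorem proposition2p5 (F : fieldType) :
  forall m : nat, is_m_F F m ->
    exists p : nat, is_pythagoras_number F p /\ (p <= m)%N.
Proof.
move=> m [m1 [mb _]].
have pb : pyth_bound F m.
  have [two0|two0] := eqVneq (2%:R : F) 0; first exact: char2_case.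
  exact: main_case.
have [p [[p1 Pp] mn le]] := exists_min (P := fun p => (1 <= p)%N /\ pyth_bound F p) (conj m1 pb).
exists p; split; last exact: le.
split; first exact: p1.
split; first exact: Pp.
move=> p' p1' pb'; apply: mn; exact: (conj p1' pb').
Qed.
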